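(* Let $n,d\ge 2$ be integers with $d\ne 3$, let $\mathbf a=(0,\dots,0,1,d-1)\in V(n,d)$ and $\Gamma=V(n,d)\setminus\{\mathbf a\}$. Let $x,y,z\in\Gamma$. If the chains $(x,y)$, $(y,z)$ and $(x,z)$ are minimal, then the chain $(x,y,z)$ is minimal.
   Context: $V(n,d)=\{\mathbf b\in\mathbb N^n:\sum_i b_i=d\}$. Order $V(n,d)$ lexicographically: $b<c$ iff the first nonzero coordinate of $c-b$ is positive (so $(0,\dots,0,d)$ is the smallest element). For $k\ge1$, a chain of length $k$ is a tuple $(u^1,\dots,u^k)\in V(n,d)^k$ (its links); its $\mathbf a$-degree is the number of indices $j$ with $u^j=\mathbf a$. Two chains of length $k$ with the same sum $u^1+\cdots+u^k$ are compared as follows: $(u^1,\dots,u^k)<(w^1,\dots,w^k)$ iff either the $\mathbf a$-degree of $u$ is smaller than that of $w$, or they have the same $\mathbf a$-degree and $(u^1,\dots,u^k)$ is lexicographically smaller than $(w^1,\dots,w^k)$ (comparing $u^1$ with $w^1$ first, using the order on $V(n,d)$). A chain $(u^1,\dots,u^k)$ is minimal if it is the smallest among all chains $(w^1,\dots,w^k)\in V(n,d)^k$ with $\sum_j w^j=\sum_j u^j$. *)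

(* Defs.v *)
From mathcomp Require Import all_boot.
Set Implicit Arguments. Unset Strict Implicit. Unset Printing Implicit Defensive.

Definition vec (n : nat) := {ffun 'I_n -> nat}.

Definition inV (n d : nat) (b : vec n) : Prop := \sum_(i < n) b i = d.

Definition vlt (n : nat) (b c : vec n) : Prop :=
  exists i : 'I_n, (forall j : 'I_n, (j < i)%N -> b j = c j) /\ (b i < c i)%N.

Definition avec (n d : nat) : vec n :=
  [ffun i : 'I_n => if (i == n.-2 :> nat) then 1 else
                    if (i == n.-1 :> nat) then d.-1 else 0].

Definition is_chain (n d k : nat) (u : seq (vec n)) : Prop :=
  size u = k /\ forall x, x \in u -> inV d x.

Definition chain_sum (n : nat) (u : seq (vec n)) : vec n :=
  [ffun i => \sum_(x <- u) x i].

Definition adeg (n : nat) (a : vec n) (u : seq (vec n)) : nat := count_mem a u.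

Fixpoint seqlt (n : nat) (u w : seq (vec n)) : Prop :=
  match u, w with
  | x :: u', y :: w' => vlt x y \/ (x = y /\ seqlt u' w')
  | _, _ => False
  end.

Definition chain_lt (n : nat) (a : vec n) (u w : seq (vec n)) : Prop :=
  (adeg a u < adeg a w)%N \/ (adeg a u = adeg a w /\ seqlt u w).

Definition minimal_chain (n d : nat) (u : seq (vec n)) : Prop :=
  is_chain d (size u) u /\
  forall w, is_chain d (size u) w -> chain_sum w = chain_sum u ->
    w = u \/ chain_lt (avec n d) u w.

(* Main.v *)
Require Import Defs.
From mathcomp Require Import all_boot zify.
Set Implicit Arguments. Unset Strict Implicit.

Lemma sumeq n (p x u v : vec n) :
  (forall k, p k + u k = x k + v k) -> \sum_k u k = \sum_k v k ->
  \sum_k p k = \sum_k x k.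
Proof.
move=> H Huv.
have: \sum_k (p k + u k) = \sum_k (x k + v k) by apply: eq_bigr => k _; exact: H.
rewrite !big_split /= Huv. move/eqP. rewrite eqn_add2r. by move/eqP.
Qed.

Lemma sum_supp1 n (v : vec n) (j : 'I_n) :
  (forall k : 'I_n, k != j -> v k = 0) -> \sum_k v k = v j.
Proof.
move=> H; rewrite (bigD1 j) //= big1 ?addn0 // => k /H.
Qed.

Lemma sum_supp2 n (v : vec n) (j1 j2 : 'I_n) : j1 != j2 ->
  (forall k : 'I_n, k != j1 -> k != j2 -> v k = 0) -> \sum_k v k = v j1 + v j2.
Proof.
move=> ne H; rewrite (bigD1 j1) //= (bigD1 j2) /=; last by rewrite eq_sym.
rewrite big1 ?addn0 // => k /andP[h1 h2]; exact: H.
Qed.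

Lemma sum_indic n (j : 'I_n) : \sum_(k < n) (k == j : nat) = 1.
Proof.
by rewrite (bigD1 j) //= eqxx big1 // => k /negbTE ->.
Qed.

Lemma vlt_irr n (b : vec n) : ~ vlt b b.
Proof. by case=> i [_]; rewrite ltnn. Qed.

Lemma vlt_asym n (b c : vec n) : vlt b c -> vlt c b -> False.
Proof.
case=> i [H1 H2] [i' [H1' H2']].
case: (ltngtP i i') => h.
- move: (H1' i h); lia.
- move: (H1 i' h); lia.
- have e : i = i' by apply: val_inj.
  subst i'; lia.
Qed.

Lemma vlt_total n (b c : vec n) : b <> c -> vlt b c \/ vlt c b.
Proof.
move=> ne.
have [k0 Hk0] : exists k, b k != c k.
  case: (boolP [exists k, b k != c k]) => [/existsP//|/existsPn H].
  exfalso; apply: ne; apply/ffunP => k.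
  by move: (H k); rewrite negbK => /eqP.
case: (@arg_minnP _ k0 (fun k => b k != c k) (fun k => val k) Hk0) => i Hi Hmin.
have agree : forall j : 'I_n, j < i -> b j = c j.
  move=> j hj; apply/eqP; apply/negPn/negP => hne.
  move: (Hmin j hne) => /= hh; move: hh hj; rewrite leqNgt => /negP; done.
case: (ltngtP (b i) (c i)) => h.
- by left; exists i.
- by right; exists i; split=> // j hj; rewrite agree.
- by move: Hi; rewrite h eqxx.
Qed.

Lemma sum_lt n (b c : vec n) (i : 'I_n) :
  (forall k, b k <= c k) -> b i < c i -> \sum_k b k < \sum_k c k.
Proof.
move=> H hi; rewrite (bigD1 i) //= [X in _ < X](bigD1 i) //=.
by rewrite -addSn; apply: leq_add => //; apply: leq_sum => k _.
Qed.

Lemma exists_gt n d (b c : vec n) (i : 'I_n) : inV d b -> inV d c ->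
  (forall k : 'I_n, k < i -> b k = c k) -> b i < c i ->
  exists j : 'I_n, i < j /\ c j < b j.
Proof.
move=> hb hc ag hi.
case: (boolP [exists j : 'I_n, (i < j) && (c j < b j)]).
  by move/existsP=> [j /andP[h1 h2]]; exists j.
move/existsPn=> H; exfalso.
have: \sum_k b k < \sum_k c k.
  apply: (sum_lt (i := i)) => // k.
  case: (ltngtP k i) => h.
  - by rewrite ag.
  - by move: (H k); rewrite h /= -leqNgt.
  - have -> : k = i by apply: val_inj.
    exact: ltnW.
by rewrite hb hc ltnn.
Qed.

Lemma seqlt2_asym n (p q x y : vec n) :
  seqlt [:: p; q] [:: x; y] -> seqlt [:: x; y] [:: p; q] -> False.
Proof.
move=> /= [h1|[e1 [h2|[e2 []]]]] [h1'|[e1' [h2'|[e2' []]]]]; subst.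
all: try by apply: (vlt_asym h1 h1').
all: try by apply: (vlt_irr h1).
all: try by apply: (vlt_irr h1').
by apply: (vlt_asym h2 h2').
Qed.

Lemma pc n d (x y p q : vec n) : inV d x -> x <> avec n d -> inV d y ->
  y <> avec n d -> inV d p -> p <> avec n d -> inV d q -> q <> avec n d ->
  minimal_chain d [:: x; y] -> (forall k, p k + q k = x k + y k) ->
  seqlt [:: p; q] [:: x; y] -> False.
Proof.
move=> hx ax hy ay hp ap hq aq [_ H] Hs Hlt.
have := H [:: p; q].
case.
- split=> // v; rewrite !inE => /orP[/eqP->|/eqP->] //.
- apply/ffunP => k; rewrite !ffunE !big_cons !big_nil !addn0; exact: Hs.
- case=> e1 e2; subst; move: Hlt => /= [h|[_ [h|[_ []]]]]; exact: vlt_irr h.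
rewrite /chain_lt /adeg /=.
have ex : (x == avec n d) = false by apply/eqP.
have ey : (y == avec n d) = false by apply/eqP.
have ep : (p == avec n d) = false by apply/eqP.
have eq' : (q == avec n d) = false by apply/eqP.
rewrite ex ey ep eq' /=.
case=> // [[_ h]]; exact: seqlt2_asym Hlt h.
Qed.

Lemma ex_contra n d (x t p q : vec n) : inV d x -> x <> avec n d -> inV d t ->
  t <> avec n d -> minimal_chain d [:: x; t] -> inV d p -> p <> avec n d ->
  (forall k, p k + q k = x k + t k) -> q <> avec n d -> vlt p x -> False.
Proof.
move=> hx ax ht at_ hm hp ap Hs aq hlt.
have hq : inV d q.
  rewrite /inV -hx; apply: (@sumeq _ q x p t) => [k|]; first by rewrite addnC Hs.
  by rewrite hp ht.
apply: (pc hx ax ht at_ hp ap hq aq hm Hs); by left.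
Qed.

Lemma avecE m d (k : 'I_m.+2) :
  avec m.+2 d k = if (k:nat) == m then 1 else if (k:nat) == m.+1 then d.-1 else 0.
Proof. by rewrite ffunE. Qed.

Lemma indic_facts n (k i j : 'I_n) : i != j ->
  (k == i : nat) + (k == j : nat) <= 1.
Proof.
move=> hij; case: (eqVneq k i) => [->|_]; last by case: (k == j).
by rewrite (negbTE hij).
Qed.

Lemma sum_indicf n (j : 'I_n) : \sum_k [ffun k => (k == j : nat)] k = 1.
Proof. by rewrite -(sum_indic j); apply: eq_bigr => k _; rewrite ffunE. Qed.

Lemma claim_t m d (x t : vec m.+2) (i j : 'I_m.+2) : 2 <= d ->
  inV d x -> x <> avec _ d -> inV d t -> t <> avec _ d ->
  minimal_chain d [:: x; t] -> i < j -> 0 < x i -> 0 < t j ->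
  forall k, x k + (k == j) = avec _ d k + (k == i).
Proof.
move=> d2 hx ax ht at_ hm hij xi tj.
have nij : i != j by apply/eqP => e; move: hij; rewrite e ltnn.
have F k : [/\ (k == i : nat) + (k == j : nat) <= 1, (k == i : nat) <= x k &
    (k == j : nat) <= t k].
  split; first exact: indic_facts.
  - by case: (eqVneq k i) => [->|].
  - by case: (eqVneq k j) => [->|].
pose p : vec m.+2 := [ffun k => x k + (k==j) - (k==i)].
pose q : vec m.+2 := [ffun k => t k + (k==i) - (k==j)].
have Hpq k : p k + q k = x k + t k.
  by rewrite !ffunE; case: (F k); case: (k == i); case: (k == j) => /= *; lia.
case: (eqVneq p (avec _ d)) => [pa|pa].
  move=> k; have := congr1 (fun f : vec m.+2 => f k) pa; rewrite /= ffunE.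
  by case: (F k); case: (k == i); case: (k == j) => /= *; lia.
exfalso.
case: (eqVneq q (avec _ d)) => [qa|qa].
  have Q k : t k + (k == i) - (k == j) = avec _ d k.
    by have := congr1 (fun f : vec m.+2 => f k) qa; rewrite /= ffunE.
  have Qi := Q i; rewrite eqxx (negbTE nij) avecE in Qi.
  have vj := ltn_ord j.
  have [ei ej] : (i:nat) = m /\ (j:nat) = m.+1.
    move: Qi; case: ifP => [/eqP hi|_]; first by move=> _; split=> //; move: hij vj; rewrite hi; lia.
    case: ifP => [/eqP hi|_]; last by lia.
    by move: hij vj; rewrite hi; lia.
  have T0 k : k != j -> t k = 0.
    move=> kj; have := Q k; rewrite (negbTE kj) avecE.
    case: (eqVneq k i) => [->|ki] /=; first by rewrite ei eqxx /=; lia.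
    have : (k:nat) != m by apply: contra ki => /eqP e; apply/eqP/val_inj; rewrite /= e ei.
    have : (k:nat) != m.+1 by apply: contra kj => /eqP e; apply/eqP/val_inj; rewrite /= e ej.
    by move=> /negbTE -> /negbTE ->; lia.
  have tj' : t j = d by rewrite -ht /inV (sum_supp1 T0).
  have ti : t i = 0 by apply: T0.
  have ntx : t <> x by move=> e; move: xi; rewrite -e ti.
  case: (vlt_total ntx) => [htx|hxt].
    apply: (ex_contra hx ax ht at_ hm ht at_ (q := x)) => //.
    by move=> k; rewrite addnC.
  case: hxt => i' [ag lt'].
  have ei' : i' = j.
    apply/eqP; apply: contraLR lt' => h; by rewrite (T0 _ h).
  subst i'.
  have X0 k : k != j -> x k = 0.
    move=> kj; rewrite ag ?T0 //.
    have := ltn_ord k.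
    have : (k:nat) != j by apply: contra kj => /eqP e; apply/eqP/val_inj.
    rewrite ej => /eqP ne lt; lia.
  by move: lt'; rewrite tj' -hx /inV (sum_supp1 X0) ltnn.
have hp : inV d p.
  rewrite /inV -hx; apply: (@sumeq _ p x [ffun k => (k==i : nat)] [ffun k => (k==j : nat)]).
    by move=> k; rewrite !ffunE; case: (F k); case: (k == i); case: (k == j) => /= *; lia.
  by rewrite !sum_indicf.
apply: (ex_contra hx ax ht at_ hm hp (elimN eqP pa) Hpq (elimN eqP qa)).
exists i; split.
  move=> k hk; rewrite ffunE.
  have -> : (k == i) = false by apply/negbTE; apply/eqP => e; move: hk; rewrite e ltnn.
  have -> : (k == j) = false by apply/negbTE; apply/eqP => e; move: hk hij; rewrite e; lia.
  by rewrite addn0 subn0.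
by rewrite ffunE eqxx (negbTE nij); lia.
Qed.

Lemma kA m (k : 'I_m.+2) : (k : nat) = m -> k = inord m.
Proof. by move=> e; apply/val_inj; rewrite /= inordK // e. Qed.

Lemma kB m (k : 'I_m.+2) : (k : nat) = m.+1 -> k = ord_max.
Proof. by move=> e; apply/val_inj. Qed.

Lemma valA m : ((inord m : 'I_m.+2) : nat) = m.
Proof. by rewrite inordK. Qed.

Lemma AneB m : (inord m : 'I_m.+2) != ord_max.
Proof. by apply/eqP => /(congr1 val); rewrite /= inordK //; lia. Qed.

Lemma pA m d (x t : vec m.+2) (i : 'I_m.+2) : 2 <= d ->
  inV d x -> x <> avec _ d -> inV d t -> t <> avec _ d ->
  minimal_chain d [:: x; t] -> (i : nat) < m -> 0 < x i ->
  (forall k : 'I_m.+2, k < i -> x k = 0) -> d - 2 <= x ord_max ->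
  2 <= t (inord m) -> False.
Proof.
move=> d2 hx ax ht at_ hm im xi x0 xB tA.
pose p : vec m.+2 := [ffun k : 'I_m.+2 => if (k:nat) == m then 2
  else if (k:nat) == m.+1 then d - 2 else 0].
pose q : vec m.+2 := [ffun k => x k + t k - p k].
have ple k : p k <= x k + t k.
  rewrite ffunE; case: ifP => [/eqP /kA -> | _]; first by lia.
  case: ifP => [/eqP /kB -> | _]; lia.
have Hpq k : p k + q k = x k + t k by rewrite [q k]ffunE; have := ple k; lia.
have p0 (k : 'I_m.+2) : (k : nat) < m -> p k = 0.
  move=> h; rewrite ffunE.
  have -> : ((k:nat) == m) = false by apply/eqP; lia.
  by have -> : ((k:nat) == m.+1) = false by apply/eqP; lia.
have hp : inV d p.
  rewrite /inV (sum_supp2 (AneB m)).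
    by rewrite !ffunE valA eqxx /= (_ : (m.+1 == m) = false) ?eqxx; [lia|apply/eqP; lia].
  move=> k h1 h2; rewrite ffunE.
  have -> : ((k:nat) == m) = false by apply/negbTE; apply: contra h1 => /eqP /kA ->.
  have -> : ((k:nat) == m.+1) = false by apply/negbTE; apply: contra h2 => /eqP /kB ->.
  done.
apply: (ex_contra hx ax ht at_ hm hp _ Hpq).
- move/(congr1 (fun f : vec m.+2 => f (inord m))); rewrite !ffunE valA eqxx; lia.
- move/(congr1 (fun f : vec m.+2 => f i)); rewrite [q i]ffunE p0 // avecE.
  have -> : ((i:nat) == m) = false by apply/eqP; lia.
  have -> : ((i:nat) == m.+1) = false by apply/eqP; lia.
  lia.
exists i; split; last by rewrite p0.
by move=> k hk; rewrite p0 ?x0 //; lia.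
Qed.

Lemma pB m d (x t : vec m.+2) (i : 'I_m.+2) : 2 <= d ->
  inV d x -> x <> avec _ d -> inV d t -> t <> avec _ d ->
  minimal_chain d [:: x; t] -> (i : nat) <= m -> avec _ d i < x i ->
  (forall k : 'I_m.+2, k < i -> x k = 0) -> d <= x ord_max + t ord_max -> False.
Proof.
move=> d2 hx ax ht at_ hm im xi x0 xB.
pose p : vec m.+2 := [ffun k : 'I_m.+2 => if (k:nat) == m.+1 then d else 0].
pose q : vec m.+2 := [ffun k => x k + t k - p k].
have ple k : p k <= x k + t k.
  rewrite ffunE; case: ifP => [/eqP /kB -> | _]; lia.
have Hpq k : p k + q k = x k + t k by rewrite [q k]ffunE; have := ple k; lia.
have p0 (k : 'I_m.+2) : (k : nat) <= m -> p k = 0.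
  move=> h; rewrite ffunE.
  by have -> : ((k:nat) == m.+1) = false by apply/eqP; lia.
have hp : inV d p.
  rewrite /inV (@sum_supp1 _ _ ord_max); first by rewrite ffunE eqxx.
  move=> k h1; rewrite ffunE.
  have -> : ((k:nat) == m.+1) = false by apply/negbTE; apply: contra h1 => /eqP /kB ->.
  done.
apply: (ex_contra hx ax ht at_ hm hp _ Hpq).
- move/(congr1 (fun f : vec m.+2 => f (inord m))); rewrite !ffunE valA eqxx.
  have -> : (m == m.+1) = false by apply/eqP; lia.
  done.
- move/(congr1 (fun f : vec m.+2 => f i)); rewrite [q i]ffunE p0 //.
  lia.
exists i; split; last by rewrite p0 //; lia.
by move=> k hk; rewrite p0 ?x0 //; lia.
Qed.

Lemma notAB m (k : 'I_m.+2) : k != inord m -> k != ord_max -> (k : nat) < m.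
Proof.
move=> h1 h2; have := ltn_ord k.
have : (k:nat) != m by apply: contra h1 => /eqP /kA ->.
have : (k:nat) != m.+1 by apply: contra h2 => /eqP /kB ->.
move=> /eqP ? /eqP ?; lia.
Qed.

Lemma eq_a m d (v : vec m.+2) :
  (forall k, k != inord m -> k != ord_max -> v k = 0) ->
  v (inord m) = 1 -> v ord_max = d.-1 -> v = avec _ d.
Proof.
move=> v0 vA vB; apply/ffunP => k; rewrite avecE.
case: ifP => [/eqP /kA -> //|h1]; case: ifP => [/eqP /kB -> //|h2].
apply: v0; first by apply: contraFN h1 => /eqP ->; rewrite valA.
by apply: contraFN h2 => /eqP ->.
Qed.

Lemma aval m d (k : 'I_m.+2) : (k : nat) < m -> avec _ d k = 0.
Proof.
move=> h; rewrite avecE.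
have -> : ((k:nat) == m) = false by apply/eqP; lia.
by have -> : ((k:nat) == m.+1) = false by apply/eqP; lia.
Qed.

Lemma caseB m d (x y z w : vec m.+2) : 2 <= d -> d <> 3 ->
  inV d x -> x <> avec _ d -> inV d y -> y <> avec _ d ->
  inV d z -> z <> avec _ d -> inV d w -> w <> avec _ d ->
  minimal_chain d [:: x; y] -> minimal_chain d [:: y; z] ->
  minimal_chain d [:: x; z] ->
  (forall k, w k <= x k + y k + z k) -> vlt w x -> False.
Proof.
move=> d2 d3 hx ax hy ay hz az hw aw hxy hyz hxz Hle [i [ag lt]].
have xi : 0 < x i by lia.
have claim (j : 'I_m.+2) : i < j -> x j < w j ->
    forall k, x k + (k == j) = avec _ d k + (k == i).
  move=> hij hj; have := Hle j; case: (posnP (y j)) => [y0|yp] hl.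
    by apply: (claim_t d2 hx ax hz az hxz hij xi); lia.
  exact: (claim_t d2 hx ax hy ay hxy hij xi yp).
have [j [hij hj]] := exists_gt hw hx ag lt.
have E := claim j hij hj.
have nij : (j == i) = false by apply/eqP => e; move: hij; rewrite e ltnn.
have uniq (k : 'I_m.+2) : i < k -> k != j -> w k <= x k.
  move=> hik hkj; rewrite leqNgt; apply/negP => hk.
  have E' := claim k hik hk.
  have := E j; have := E' j; rewrite eqxx nij eq_sym (negbTE hkj); lia.
have Ej := E j; rewrite eqxx nij avecE in Ej.
have Ei := E i; rewrite eqxx eq_sym nij in Ei.
have Eo (k : 'I_m.+2) : k != i -> k != j -> x k = avec _ d k.
  by move=> ki kj; have := E k; rewrite (negbTE ki) (negbTE kj); lia.
have xk0 (k : 'I_m.+2) : k < i -> x k = 0.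
  move=> hk; rewrite Eo ?aval //.
  - move: hij; have := ltn_ord j; lia.
  - by apply/eqP => e; move: hk; rewrite e ltnn.
  - by apply/eqP => e; move: hk hij; rewrite e; lia.
have vj := ltn_ord j.
have [jm|jm] : (j : nat) = m \/ (j : nat) = m.+1.
  move: Ej; case: ifP => [/eqP|_]; first by left.
  by case: ifP => [/eqP|_]; [right|lia].
-
  have im : (i : nat) < m by lia.
  have ejA : j = inord m by apply: kA.
  have w0 k : k != inord m -> k != ord_max -> w k = 0.
    move=> h1 h2; have km := notAB h1 h2.
    case: (ltngtP k i) => h.
    + by rewrite ag // xk0.
    + have : w k <= x k by apply: uniq; rewrite // ejA.
      rewrite Eo ?aval //; first lia.
      * by apply/eqP => e; move: h; rewrite e ltnn.
      * by rewrite ejA.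
    + have -> : k = i by apply: val_inj.
      move: lt Ei; rewrite aval //; lia.
  have wB : w ord_max <= x ord_max.
    by apply: uniq; [rewrite /=; lia | rewrite ejA eq_sym AneB].
  have xB : x ord_max = d.-1.
    rewrite Eo ?avecE /=; first by rewrite eqxx (_ : (m.+1 == m) = false) //; apply/eqP; lia.
    * by apply/eqP => e; move: im; rewrite -e /=; lia.
    * by rewrite ejA eq_sym AneB.
  have sw := hw; rewrite /inV (sum_supp2 (AneB m) w0) in sw.
  have wA : 2 <= w (inord m).
    case: (ltngtP (w (inord m)) 1) => h; try lia.
    exfalso; apply: aw; apply: eq_a => //; lia.
  have xA : x (inord m) = 0 by rewrite -ejA; move: Ej; rewrite jm eqxx; lia.
  have := Hle (inord m); rewrite xA add0n => hyz2.
  case: (leqP 2 (y (inord m))) => hy2.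
    by apply: (pA d2 hx ax hy ay hxy im xi xk0) => //; lia.
  case: (leqP 2 (z (inord m))) => hz2.
    by apply: (pA d2 hx ax hz az hxz im xi xk0) => //; lia.
  have [k [hk yk]] : exists k : 'I_m.+2, (k : nat) < m /\ 0 < y k.
    case: (boolP [exists k : 'I_m.+2, ((k : nat) < m) && (0 < y k)]).
      by move/existsP => [k /andP[h1 h2]]; exists k.
    move/existsPn => H; exfalso.
    have y0 k : k != inord m -> k != ord_max -> y k = 0.
      move=> h1 h2; have := H k; rewrite (notAB h1 h2) /=; lia.
    have sy := hy; rewrite /inV (sum_supp2 (AneB m) y0) in sy.
    apply: ay; apply: eq_a => //; lia.
  have hkA : k < (inord m : 'I_m.+2) by rewrite valA.
  have zA : 0 < z (inord m) by lia.
  have nk : (inord m == k) = false.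
    by apply/eqP => e; move: hk; rewrite -e valA ltnn.
  have := claim_t d2 hy ay hz az hyz hkA yk zA (inord m).
  rewrite eqxx avecE valA eqxx nk; lia.
-
  have im : (i : nat) <= m by lia.
  have ejB : j = ord_max by apply: kB.
  have w0 k : k != inord m -> k != ord_max -> w k = 0.
    move=> h1 h2; have km := notAB h1 h2.
    case: (ltngtP k i) => h.
    + by rewrite ag // xk0.
    + have : w k <= x k by apply: uniq; rewrite // ejB.
      rewrite Eo ?aval //; first lia.
      * by apply/eqP => e; move: h; rewrite e ltnn.
      * by rewrite ejB.
    + have ei : k = i by apply: val_inj.
      move: lt Ei; rewrite -ei aval //; lia.
  have wA : w (inord m) <= 1.
    case: (ltngtP (inord m : 'I_m.+2) i) => h.
    + move: h; rewrite valA; lia.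
    + have : w (inord m) <= x (inord m) by apply: uniq; rewrite // ejB AneB.
      rewrite Eo ?avecE ?valA ?eqxx //.
      * by apply/eqP => e; move: h; rewrite e ltnn.
      * by rewrite ejB AneB.
    + have ei : inord m = i by apply: val_inj.
      move: lt Ei; rewrite -ei avecE valA eqxx; lia.
  have sw := hw; rewrite /inV (sum_supp2 (AneB m) w0) in sw.
  have wB : w ord_max = d.
    case: (posnP (w (inord m))) => h; first lia.
    exfalso; apply: aw; apply: eq_a => //; lia.
  have xB : x ord_max + 1 = d.-1.
    have hm1 : (m.+1 == m) = false by apply/eqP; lia.
    rewrite -ejB; move: Ej; rewrite jm hm1 eqxx /=; lia.
  have := Hle ord_max; rewrite wB => hyz2.
  have xi' : avec _ d i < x i by lia.
  case: (leqP 2 (y ord_max)) => hy2.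
    by apply: (pB d2 hx ax hy ay hxy im xi' xk0); lia.
  case: (leqP 2 (z ord_max)) => hz2.
    by apply: (pB d2 hx ax hz az hxz im xi' xk0); lia.
  have [k [hk yk]] : exists k : 'I_m.+2, (k : nat) <= m /\ 0 < y k.
    case: (boolP [exists k : 'I_m.+2, ((k : nat) <= m) && (0 < y k)]).
      by move/existsP => [k /andP[h1 h2]]; exists k.
    move/existsPn => H; exfalso.
    have y0 k : k != ord_max -> y k = 0.
      move=> h1; have := H k.
      have : (k : nat) <= m.
        have := ltn_ord k.
        have : (k:nat) != m.+1 by apply: contra h1 => /eqP /kB ->.
        move=> /eqP ? ?; lia.
      by move=> ->; rewrite /=; lia.
    have sy := hy; rewrite /inV (sum_supp1 y0) in sy; lia.
  have hkB : k < (ord_max : 'I_m.+2) by rewrite /=; lia.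
  have zB : 0 < z ord_max by lia.
  have nk : (ord_max == k) = false.
    by apply/eqP => e; move: hk; rewrite -e /=; lia.
  have := claim_t d2 hy ay hz az hyz hkB yk zB ord_max.
  rewrite eqxx avecE /= eqxx nk (_ : (m.+1 == m) = false); last by apply/eqP; lia.
  lia.
Qed.

Theorem lemma2p6 (n d : nat) (x y z : vec n) :
  (2 <= n)%N -> (2 <= d)%N -> d <> 3 ->
  inV d x -> x <> avec n d ->
  inV d y -> y <> avec n d ->
  inV d z -> z <> avec n d ->
  minimal_chain d [:: x; y] ->
  minimal_chain d [:: y; z] ->
  minimal_chain d [:: x; z] ->
  minimal_chain d [:: x; y; z].
Proof.
move: x y z; case: n => [|[|m]] x y z // _ d2 d3 hx ax hy ay hz az hxy hyz hxz.
split.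
  split=> // v; rewrite !inE => /or3P[] /eqP -> //.
move=> w [sw inw] hs.
case: w sw inw hs => [|w1 [|w2 [|w3 [|? ?]]]] // _ inw hs.
have hw1 : inV d w1 by apply: inw; rewrite !inE eqxx.
have hw2 : inV d w2 by apply: inw; rewrite !inE eqxx orbT.
have hw3 : inV d w3 by apply: inw; rewrite !inE eqxx !orbT.
have Hs k : w1 k + w2 k + w3 k = x k + y k + z k.
  have := congr1 (fun f : vec m.+2 => f k) hs.
  by rewrite /= !ffunE !big_cons !big_nil; lia.
case: (eqVneq [:: w1; w2; w3] [:: x; y; z]) => [e|ne]; first by left.
right; rewrite /chain_lt /adeg.
have ad : count_mem (avec m.+2 d) [:: x; y; z] = 0.
  rewrite /=.
  have -> : (x == avec m.+2 d) = false by apply/eqP.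
  have -> : (y == avec m.+2 d) = false by apply/eqP.
  by have -> : (z == avec m.+2 d) = false by apply/eqP.
rewrite ad.
case: (posnP (count_mem (avec m.+2 d) [:: w1; w2; w3])) => [h0|hp]; last by left.
right; split; first by rewrite h0.
have aw1 : w1 <> avec m.+2 d.
  by move=> e; move: h0; rewrite /= e eqxx.
have aw2 : w2 <> avec m.+2 d.
  by move=> e; move: h0; rewrite /= e eqxx; lia.
have aw3 : w3 <> avec m.+2 d.
  by move=> e; move: h0; rewrite /= e eqxx; lia.
case: (eqVneq w1 x) => [e1|n1].
  subst w1.
  have Hs2 k : w2 k + w3 k = y k + z k by have := Hs k; lia.
  case: (eqVneq w2 y) => [e2|n2].
    subst w2.
    have n3 : w3 <> z by move=> e3; subst w3; rewrite eqxx in ne.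
    case: (vlt_total n3) => h.
      exfalso; apply: (pc hy ay hz az hy ay hw3 aw3 hyz Hs2).
      by right; split=> //; left.
    by right; split=> //; right; split=> //; left.
  case: (vlt_total (elimN eqP n2)) => h.
    exfalso; apply: (pc hy ay hz az hw2 aw2 hw3 aw3 hyz Hs2); by left.
  by right; split=> //; left.
case: (vlt_total (elimN eqP n1)) => h.
  exfalso; apply: (caseB d2 d3 hx ax hy ay hz az hw1 aw1 hxy hyz hxz _ h).
  by move=> k; have := Hs k; lia.
by left.
Qed.
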